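(* Let $\mathcal{Q}=\{\mathcal{Q}^1,\dots,\mathcal{Q}^M\}$ be a set of $M$ pairwise distinct valid token sequences, and run beam search of width $M$ on the language model under grounded constrained decoding with respect to $\mathcal{Q}$. Then the set of complete sequences returned by the beam search is exactly $\{\mathcal{Q}^1,\dots,\mathcal{Q}^M\}$.
   Context: An autoregressive language model has a finite vocabulary $\mathcal{V}$ containing an end-of-sequence token $\langle eos\rangle$; given a prefix $(t_0,\dots,t_i)$ (possibly empty) it outputs logits $(\ell_{i+1}^{(x)})_{x\in\mathcal{V}}$, all finite real numbers. Each valid sequence $\mathcal{Q}^k=(n_0,\dots,n_{Q_k})\in\mathcal{V}^{Q_k+1}$ has variable length and contains $\langle eos\rangle$ exactly once, as its last token; $\mathcal{Q}^k_{0:j}$ denotes its length-$j$ prefix. Grounded constrained decoding: after prefix $(t_0,\dots,t_i)$, the valid-next-token set is $M_{i+1}=\{t\in\mathcal{V}:\exists k,\ \mathcal{Q}^k_{0:i+2}=(t_0,\dots,t_i,t)\}$ (for the empty prefix, the set of first tokens of the $\mathcal{Q}^k$); masked logits are $\tilde\ell_{i+1}^{(x)}=\ell_{i+1}^{(x)}$ if $x\in M_{i+1}$ and $-\infty$ otherwise; the constrained next-token probability $\tilde p(\cdot\mid t_0,\dots,t_i)$ is their softmax with $\exp(-\infty)=0$ (all probabilities $0$ if $M_{i+1}=\emptyset$); the constrained probability $\tilde p$ of a sequence is the product of its constrained conditional next-token probabilities. A sequence is complete if it ends in $\langle eos\rangle$. Beam search of width $M$: start from the empty hypothesis; at each step,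 every incomplete hypothesis is extended by every token of $\mathcal{V}$, complete hypotheses are carried over unchanged, hypotheses with constrained probability $0$ are discarded, and among the remaining ones the (at most) $M$ with the highest constrained probability are kept; the procedure stops when all kept hypotheses are complete and returns them. *)

(* Defs.v *)
From HB Require Import structures.
From mathcomp Require Import all_boot all_order all_algebra.
From mathcomp Require Import reals sequences exp.
Set Implicit Arguments. Unset Strict Implicit. Unset Printing Implicit Defensive.
Import Order.TTheory GRing.Theory Num.Theory.
Local Open Scope ring_scope.

Section Beam.
Variables (R : realType) (V : finType) (eos : V).
(* language model: prefix (t_0,...,t_i) |-> logits for the next token *)
Variable lm : seq V -> V -> R.
Variable Q : seq (seq V).

Definition valid_seq (q : seq V) : bool :=
  (q != [::]) && (last eos q == eos) && (count_mem eos q == 1%N).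

Definition complete (h : seq V) : bool := (h != [::]) && (last eos h == eos).

Definition valid_next (p : seq V) : pred V :=
  fun t => has (fun q => take (size p).+1 q == rcons p t) Q.

Definition cprob (p : seq V) (x : V) : R :=
  if x \in valid_next p then
    expR (lm p x) / \sum_(y <- enum V | y \in valid_next p) expR (lm p y)
  else 0.

Definition seq_prob (h : seq V) : R :=
  \prod_(i < size h) cprob (take i h) (nth eos h i).

Definition candidates (B : seq (seq V)) : seq (seq V) :=
  [seq h <- flatten [seq (if complete h then [:: h]
                          else [seq rcons h x | x <- enum V]) | h <- B]
   | seq_prob h != 0].

(* one beam-search step of width w: keep (at most) w candidates of highest
   constrained probability (any tie-breaking allowed) *)
Definition beam_step (w : nat) (B B' : seq (seq V)) : Prop :=
  exists rest : seq (seq V),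
    [/\ perm_eq (candidates B) (B' ++ rest),
        size B' = minn w (size (candidates B)) &
        forall x y, x \in B' -> y \in rest -> seq_prob y <= seq_prob x].

End Beam.

(* Main.v *)
Require Import Defs.
From HB Require Import structures.
From mathcomp Require Import all_boot all_order all_algebra.
From mathcomp Require Import reals sequences exp.
From mathcomp Require Import zify.
Import Order.TTheory GRing.Theory Num.Theory.
Local Open Scope ring_scope.

Section Proof.
Variables (R : realType) (V : finType) (eos : V) (lm : seq V -> V -> R)
  (Q : seq (seq V)).
Hypothesis validQ : all (valid_seq eos) Q.

Local Notation sp := (seq_prob eos lm Q).
Local Notation cp := (cprob lm Q).
Local Notation vn := (valid_next Q).
Local Notation cmp := (complete eos).
Local Notation cand := (candidates eos lm Q).

Lemma sp_nil : sp [::] = 1.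
Proof. by rewrite /seq_prob big_ord0. Qed.

Lemma sp_rcons p t : sp (rcons p t) = sp p * cp p t.
Proof.
rewrite /seq_prob size_rcons big_ord_recr /=.
rewrite -cats1 take_size_cat // nth_cat ltnn subnn /=.
congr (_ * _); apply: eq_bigr => i _.
by rewrite nth_cat (ltn_ord i) takel_cat //; exact: ltnW.
Qed.

Lemma cp_neq0 p t : (cp p t != 0) = (t \in vn p).
Proof.
rewrite /cprob; case: ifP => vt; last by rewrite eqxx.
rewrite mulf_neq0 ?(gt_eqF (expR_gt0 _)) // invr_neq0 // psumr_neq0.
  apply/hasP; exists t; first by rewrite mem_enum.
  by rewrite vt expR_gt0.
by move=> i _; rewrite ltW ?expR_gt0.
Qed.

Lemma vn_take q k : q \in Q -> (k < size q)%N -> nth eos q k \in vn (take k q).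
Proof.
move=> qQ lt; apply/hasP; exists q => //.
by rewrite size_take lt (take_nth eos lt).
Qed.

Lemma sp_take q k : q \in Q -> sp (take k q) != 0.
Proof.
move=> qQ; elim: k => [|k IH]; first by rewrite take0 sp_nil oner_eq0.
case: (ltnP k (size q)) => lt.
  rewrite (take_nth eos lt) sp_rcons mulf_neq0 // cp_neq0; exact: vn_take.
rewrite take_oversize ?(leq_trans lt) //.
by rewrite (take_oversize lt) in IH.
Qed.

Lemma strict_incomplete q k : valid_seq eos q -> (k < size q)%N ->
  ~~ cmp (take k q).
Proof.
case/andP => /andP [qn lq] cq lt; apply/negP => /andP [tn /eqP lt_eos].
have e1 : eos \in take k q.
  by rewrite -lt_eos; case: (take k q) tn => //= a s _; exact: mem_last.
have e2 : eos \in drop k q.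
  move: lq; rewrite -[in last _ q](cat_take_drop k q) last_cat.
  case Hd: (drop k q) => [|b s'] /=.
    by move/eqP: Hd; rewrite -size_eq0 size_drop subn_eq0 leqNgt lt.
  by move/eqP <-; exact: mem_last.
move: cq; rewrite -(cat_take_drop k q) count_cat.
move: e1 e2; rewrite -!has_pred1 !has_count.
move=> h1 h2 /eqP; lia.
Qed.

Lemma valid_complete q : q \in Q -> cmp q.
Proof.
by move=> qQ; case/andP: (allP validQ q qQ) => /andP [qn lq] _; rewrite /complete qn lq.
Qed.

Lemma complete_take q k : q \in Q -> cmp (take k q) -> take k q = q.
Proof.
move=> qQ c; case: (ltnP k (size q)) => lt; last exact: take_oversize.
by have := @strict_incomplete q k (allP validQ q qQ) lt; rewrite c.
Qed.

Definition T n := undup [seq take n q | q <- Q].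

Lemma memT n x : (x \in T n) = has (fun q => x == take n q) Q.
Proof.
rewrite mem_undup; apply/mapP/hasP => [[q qQ ->]|[q qQ /eqP ->]];
  by exists q.
Qed.

Definition Inv n (B : seq (seq V)) :=
  uniq B /\ forall x, (x \in B) = (x \in T n) || ((n == 0)%N && (x == [::])).

Lemma Inv_facts n B h : Inv n B -> h \in B ->
  [/\ (size h <= n)%N, (~~ cmp h -> size h = n) & (cmp h -> h \in Q)].
Proof.
case=> _ mB; rewrite mB; case/orP => [|/andP [/eqP -> /eqP ->]] //.
rewrite memT => /hasP [q qQ /eqP ->]; split.
- by rewrite size_take; case: ltnP.
- move=> nc; rewrite size_take; case: ltnP => // le.
  by move: nc; rewrite take_oversize // valid_complete.
- by move=> c; rewrite complete_take.
Qed.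

Definition ext (h : seq V) := if cmp h then [:: h] else [seq rcons h x | x <- enum V].

Lemma uniq_flatten_map (T1 T2 : eqType) (f : T1 -> seq T2) (s : seq T1) :
  uniq s -> (forall x, x \in s -> uniq (f x)) ->
  (forall x y z, x \in s -> y \in s -> z \in f x -> z \in f y -> x = y) ->
  uniq (flatten (map f s)).
Proof.
elim: s => //= a s IH /andP [an us] uf dis.
rewrite cat_uniq uf ?mem_head //= IH //; last first.
- by move=> x y z xs ys; apply: dis; rewrite inE ?xs ?ys orbT.
- by move=> x xs; apply: uf; rewrite inE xs orbT.
rewrite andbT; apply/hasP => [[z /flatten_mapP [y ys zy] za]].
have ay : a = y by apply: (dis a y z) => //; rewrite inE ?eqxx ?ys ?orbT.
by move: an; rewrite ay ys.
Qed.

Arguments Inv_facts [n B h].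

Lemma cand_spec n B : Inv n B -> uniq (cand B) /\ cand B =i T n.+1.
Proof.
move=> I; have [uB mB] := I; split.
  apply: filter_uniq; apply: uniq_flatten_map => //.
    move=> h _; case: (cmp h) => //; rewrite map_inj_uniq ?enum_uniq //.
    by move=> a b /rcons_inj [].
  move=> x y z xB yB.
  have [sx ix _] := Inv_facts I xB; have [sy iy _] := Inv_facts I yB.
  case cx: (cmp x); case cy: (cmp y) => //=.
  - by rewrite !inE => /eqP -> /eqP.
  - rewrite inE => /eqP -> /mapP [t _ e].
    have := sx; rewrite e size_rcons iy ?cy // ltnn //.
  - move=> /mapP [t _ ->]; rewrite inE => /eqP e.
    have := sy; rewrite -e size_rcons ix ?cx // ltnn //.
  - by move=> /mapP [t _ ->] /mapP [t' _ /rcons_inj [->]].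
move=> x; rewrite mem_filter memT; apply/andP/hasP.
  case=> spx /flatten_mapP [h hB]; rewrite /ext.
  have [sh ih qh] := Inv_facts I hB.
  case ch: (cmp h).
    rewrite inE => /eqP ->; exists h; first exact: qh.
    by rewrite take_oversize // (leq_trans sh).
  move=> /mapP [t _ xe]; move: spx; rewrite xe sp_rcons mulf_eq0 negb_or.
  case/andP => _; rewrite cp_neq0 => /hasP [q qQ /eqP e].
  by exists q => //; rewrite -(ih (negbT ch)) e.
case=> q qQ /eqP ->; split; first exact: sp_take.
apply/flatten_mapP; case: (ltnP n (size q)) => lt.
  exists (take n q).
    by rewrite mB memT; apply/orP; left; apply/hasP; exists q.
  rewrite /ext (negbTE (@strict_incomplete q n (allP validQ q qQ) lt)).
  by rewrite (take_nth eos lt); apply: map_f; rewrite mem_enum.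
exists q.
  by rewrite mB memT; apply/orP; left; apply/hasP; exists q; rewrite // take_oversize.
by rewrite /ext valid_complete // take_oversize ?inE // (leq_trans lt).
Qed.

Arguments cand_spec [n B].

Lemma Inv_step n B B' : Inv n B -> beam_step eos lm Q (size Q) B B' -> Inv n.+1 B'.
Proof.
move=> I [rest [pe sz _]]; have [uc mc] := cand_spec I.
have sc : size (cand B) = size (T n.+1).
  by apply: perm_size; apply: uniq_perm => //; exact: undup_uniq.
have le : (size (cand B) <= size Q)%N.
  by rewrite sc (leq_trans (size_undup _)) // size_map.
move: sz; rewrite (minn_idPr le) => sz.
have re : rest = [::].
  have ps := perm_size pe; rewrite size_cat sz in ps.
  apply/eqP; rewrite -size_eq0; apply/eqP.
  by apply/(@addnI (size (cand B))); rewrite addn0 -ps.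
move: pe; rewrite re cats0 => pe; split.
  by rewrite -(perm_uniq pe).
by move=> x; rewrite -(perm_mem pe) mc orbF.
Qed.

End Proof.
Arguments Inv_step [R V eos lm Q] validQ [n B B'].
Arguments memT {V Q n x}.
Arguments valid_complete [V eos Q] validQ {q}.
Arguments complete_take [V eos Q] validQ {q k}.
Arguments Inv [V] Q n B.

Theorem lemma1p3 (R : realType) (V : finType) (eos : V)
    (lm : seq V -> V -> R) (Q : seq (seq V)) :
  uniq Q -> all (valid_seq eos) Q ->
  forall B : nat -> seq (seq V),
    B 0%N = [:: [::]] ->
    (forall n, ~~ all (complete eos) (B n) ->
       beam_step eos lm Q (size Q) (B n) (B n.+1)) ->
    exists n : nat,
      [/\ all (complete eos) (B n),
          (forall m, (m < n)%N -> ~~ all (complete eos) (B m)) &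
          B n =i Q].
Proof.
move=> _ vQ B B0 step.
set P := fun m => all (complete eos) (B m).
have inv : forall n, (forall m, (m < n)%N -> ~~ P m) -> Inv Q n (B n).
  elim=> [_|n IH H].
    rewrite B0; split => // x; rewrite inE memT /=.
    case: eqP => [->|nx]; first by rewrite orbT.
    rewrite orbF; apply/esym/hasP => [[q _ /eqP e]]; apply: nx.
    by rewrite e take0.
  apply: (Inv_step vQ (IH _)); first by move=> m lt; apply: H; exact: ltnW.
  by apply: step; apply: H.
have szQ : forall q, q \in Q -> (size q <= sumn (map size Q))%N.
  elim: (Q) => //= a s IHs q; rewrite inE => /orP [/eqP ->|qs].
    exact: leq_addr.
  exact: leq_trans (IHs q qs) (leq_addl _ _).
set n0 := (sumn (map size Q)).+1.
have ex : exists n, P n.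
  case: (boolP [exists m : 'I_n0, P m]) => [/existsP [m Pm]|/existsPn H].
    by exists m.
  exists n0; have [_ mB] := inv n0 (fun m lt => H (Ordinal lt)).
  apply/allP => h; rewrite mB orbF memT => /hasP [q qQ /eqP ->].
  by rewrite take_oversize ?(valid_complete vQ) // ltnW // ltnS szQ.
case: (ex_minnP ex) => n Pn minn; exists n.
have Hm : forall m, (m < n)%N -> ~~ P m.
  by move=> m lt; apply/negP => /minn; rewrite leqNgt lt.
split => //.
have [_ mB] := inv n Hm.
have n0' : n != 0%N.
  apply/eqP => n0E; move: Pn; rewrite /P n0E B0 /=.
  by [].
move=> x; rewrite mB (negbTE n0') orbF memT; apply/hasP/idP.
  case=> q qQ /eqP e.
  have xB : x \in B n.
    by rewrite mB memT (negbTE n0') orbF; apply/hasP; exists q; rewrite // e.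
  by rewrite e (complete_take vQ) //; [rewrite -e; exact: (allP Pn)].
move=> xQ; exists x => //; apply/eqP; apply/esym/(complete_take vQ) => //.
apply: (allP Pn); rewrite mB memT (negbTE n0') orbF; apply/hasP; exists x => //.
Qed.
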